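(* The function $\tilde H:(0,+\infty)\to\mathbb R$ is monotonically decreasing on $(0,1/\sqrt2)$ and monotonically increasing on $[1/\sqrt2,+\infty)$. Moreover, $$\lim_{q\to 0^+}\tilde H(q)=\lim_{q\to+\infty}\tilde H(q)=1.$$
   Context: For $q>0$, let $\tilde q$ be the root, in the closed upper half-plane $\Im z\ge 0$, of the cubic equation $q(z^3-z)+1=0$ having the smallest positive real part, and define $$\tilde H(q)=\exp\Big(\log\Big|\frac{\tilde q-1}{\tilde q+1}\Big|+q\,\Re(\tilde q^{2})\Big).$$ *)

(* Defs.v *)
From mathcomp Require Import all_boot all_order all_algebra.
From mathcomp Require Export complex.
From mathcomp Require Export all_classical all_reals all_analysis.
Set Implicit Arguments. Unset Strict Implicit. Unset Printing Implicit Defensive.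
Import Order.TTheory GRing.Theory Num.Theory.
Local Open Scope ring_scope.
Local Open Scope classical_set_scope.
Local Open Scope complex_scope.
Local Open Scope ring_scope.

Section Defs.
Variable R : realType.

Definition cubic_root (q : R) (z : R[i]) : Prop :=
  q%:C * (z ^+ 3 - z) + 1 = 0.

Definition admissible_root (q : R) (z : R[i]) : Prop :=
  [/\ cubic_root q z, 0 <= complex.Im z & 0 < complex.Re z].

Definition is_tilde_q (q : R) (z : R[i]) : Prop :=
  admissible_root q z /\
  (forall w : R[i], admissible_root q w -> complex.Re z <= complex.Re w).

(* tilde q, chosen by (classical) description; unique for q > 0. *)
Definition tilde_q (q : R) : R[i] := xget 0 (is_tilde_q q).

Definition tilde_H (q : R) : R :=
  let tq := tilde_q q in
  expR (ln (ComplexField.Normc.normc ((tq - 1) / (tq + 1))) + q * complex.Re (tq ^+ 2)).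

End Defs.

(* Main.v *)
Require Import Defs.
From mathcomp Require Import all_boot all_order all_algebra.
From mathcomp Require Import complex.
From mathcomp Require Import all_classical all_reals all_analysis.
From mathcomp Require Import ring lra.
Import Order.TTheory GRing.Theory Num.Theory.
Import numFieldNormedType.Exports.
Local Open Scope classical_set_scope.
Local Open Scope ring_scope.

Section S.
Local Open Scope complex_scope.
Local Open Scope ring_scope.
Set Implicit Arguments. Unset Strict Implicit.
Variable R : realType.
Implicit Types f g : R -> R.

Lemma dcst (c x : R) : is_derive x 1 (fun _ : R => c) 0.
Proof. exact: is_derive_cst. Qed.
Lemma did (x : R) : is_derive x 1 (fun y : R => y) 1.
Proof. exact: is_derive_id. Qed.
Lemma dD f g (x df dg : R) : is_derive x 1 f df -> is_derive x 1 g dg ->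
  is_derive x 1 (fun y => f y + g y) (df + dg).
Proof. move=> H1 H2; exact: is_deriveD. Qed.
Lemma dN f (x df : R) : is_derive x 1 f df -> is_derive x 1 (fun y => - f y) (- df).
Proof. move=> H1; exact: is_deriveN. Qed.
Lemma dM f g (x df dg : R) : is_derive x 1 f df -> is_derive x 1 g dg ->
  is_derive x 1 (fun y => f y * g y) (f x * dg + g x * df).
Proof. move=> H1 H2; exact: is_deriveM. Qed.
Lemma dV f (x df : R) : f x != 0 -> is_derive x 1 f df ->
  is_derive x 1 (fun y => (f y)^-1) (- (f x) ^- 2 * df).
Proof. move=> H1 H2; exact: is_deriveV. Qed.
Lemma dX f (x df : R) n : is_derive x 1 f df ->
  is_derive x 1 (fun y => (f y) ^+ n) (n%:R * f x ^+ n.-1 * df).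
Proof.
move=> H1; elim: n => [|n IH].
  by rewrite expr0 mul0r mul0r; apply: is_derive_eq; [apply: dcst|].
apply: is_derive_eq.
  have -> : (fun y => f y ^+ n.+1) = (fun y => f y * f y ^+ n) by apply/funext=> y; rewrite exprS.
  exact: dM H1 IH.
case: n {IH} => [|n] /=; first by rewrite !expr0; ring.
rewrite !exprS; ring.
Qed.
Lemma dln f (x df : R) : 0 < f x -> is_derive x 1 f df ->
  is_derive x 1 (fun y => ln (f y)) (df / f x).
Proof.
move=> H1 H2; have := is_derive1_comp (is_derive1_ln H1) H2.
by rewrite mulrC.
Qed.
Lemma dexp f (x df : R) : is_derive x 1 f df ->
  is_derive x 1 (fun y => expR (f y)) (expR (f x) * df).
Proof. move=> H2; exact: (is_derive1_comp (is_derive_expR (f x)) H2). Qed.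

Lemma deq f (x df df' : R) : is_derive x 1 f df -> df = df' -> is_derive x 1 f df'.
Proof. by move=> H <-. Qed.

Lemma test (a : R) : is_derive a 1 (fun a : R => 4*a^+2 - 2*a) (8*a-2).
Proof.
apply: (deq (dD (dM (dcst 4 a) (dX 2 (did a))) (dN (dM (dcst 2 a) (did a))))).
simpl. ring.
Qed.

Lemma cplx (q x y : R) : cubic_root q (x +i* y) <->
  q*(x^+3 - 3*x*y^+2 - x) + 1 = 0 /\ q*(3*x^+2*y - y^+3 - y) = 0.
Proof.
rewrite /cubic_root.
have -> : (x +i* y) ^+ 3 - (x +i* y) = (x^+3 - 3*x*y^+2 - x) +i* (3*x^+2*y - y^+3 - y).
  rewrite !exprS expr0 mulr1 /=. apply/eqP; rewrite eq_complex /=; apply/andP; split; apply/eqP; ring.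
set u := (x ^+ 3 - 3 * x * y ^+ 2 - x); set v := (3 * x ^+ 2 * y - y ^+ 3 - y).
have -> : q%:C * (u +i* v) + 1 = (q*u+1) +i* (q*v).
  apply/eqP; rewrite eq_complex /=; apply/andP; split; apply/eqP; ring.
split.
  by case.
by case=> -> ->.
Qed.

Definition c3 : R := (Num.sqrt 3)^-1.
Lemma c3_gt0 : 0 < c3.
Proof. by rewrite /c3 invr_gt0 sqrtr_gt0. Qed.
Lemma c3_sq : c3 ^+ 2 * 3 = 1.
Proof. by rewrite /c3 exprVn sqr_sqrtr // mulVf. Qed.

Lemma sqrt_sq (u : R) : 0 <= u -> Num.sqrt u ^+ 2 = u.
Proof. by move=> h; rewrite sqr_sqrtr. Qed.

Lemma admC q a : c3 <= a -> q * (8*a^+3 - 2*a) = 1 ->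
  admissible_root q (a +i* Num.sqrt (3*a^+2 - 1)).
Proof.
move=> ha hq.
have c0 := c3_gt0; have cs := c3_sq.
have a0 : 0 < a by apply: lt_le_trans ha.
have hb : 0 <= 3*a^+2 - 1 by nra.
set b := Num.sqrt _.
have b2 : b^+2 = 3*a^+2 - 1 by rewrite sqrt_sq.
split => /=; last by [].
  apply/cplx; split.
    rewrite b2; nra.
  have -> : 3 * a ^+ 2 * b - b ^+ 3 - b = b * (3*a^+2 - 1 - b^+2) by ring.
  by rewrite b2 subrr mulr0 mulr0.
exact: sqrtr_ge0.
Qed.

Lemma uniqC q a w : c3 <= a -> q * (8*a^+3 - 2*a) = 1 ->
  admissible_root q w -> w = a +i* Num.sqrt (3*a^+2 - 1).
Proof.
move=> ha hq; case: w => x y [/cplx [E1 E2] /= y0 x0].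
have c0 := c3_gt0; have cs := c3_sq.
have a0 : 0 < a by apply: lt_le_trans ha.
have hb : 0 <= 3*a^+2 - 1 by nra.
have q0 : q != 0 by apply/eqP => q0; move: hq; rewrite q0 mul0r => /eqP; rewrite eq_sym oner_eq0.
have : q * (y * (3*x^+2 - 1 - y^+2)) = 0 by rewrite -E2; ring.
move/eqP; rewrite mulf_eq0 (negbTE q0) /= mulf_eq0 => /orP [/eqP y00|/eqP yy].
  subst y.
  have E : q * ((x + 2*a) * ((x-a)^+2 + (3*a^+2 - 1))) = 0.
    move: E1; rewrite !expr0n /= mulr0 subr0 => E1.
    nra.
  move/eqP: E; rewrite mulf_eq0 (negbTE q0) /= mulf_eq0 => /orP [/eqP h|/eqP E]; first by exfalso; nra.
  have := sqr_ge0 (x - a) => sq.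
  have e1 : (x - a)^+2 = 0 by lra.
  have e2 : 3*a^+2 - 1 = 0 by lra.
  move/eqP: e1; rewrite sqrf_eq0 subr_eq0 => /eqP ->.
  by rewrite e2 sqrtr0.
have yy' : y^+2 = 3*x^+2 - 1 by lra.
have E : q * ((x - a) * (8*(x^+2 + x*a + a^+2) - 2)) = 0.
  rewrite yy' in E1; nra.
move/eqP: E; rewrite mulf_eq0 (negbTE q0) /= mulf_eq0 => /orP [|/eqP E]; last by exfalso; nra.
rewrite subr_eq0 => /eqP xa; subst x.
congr (_ +i* _).
by rewrite -yy' sqrtr_sqr ger0_norm.
Qed.

Lemma admR q t : 0 < t <= c3 -> q * (t - t^+3) = 1 -> admissible_root q (t +i* 0).
Proof.
move=> /andP [t0 tc] hq; split => //=.
apply/cplx; split; last by ring.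
rewrite expr0n /=; nra.
Qed.

Lemma minR q t x y : 0 < t <= c3 -> q * (t - t^+3) = 1 ->
  admissible_root q (x +i* y) -> t <= x /\ (x <= t -> x +i* y = t +i* 0).
Proof.
move=> /andP [t0 tc] hq [/cplx [E1 E2] /= y0 x0].
have c0 := c3_gt0; have cs := c3_sq.
have q0 : q != 0 by apply/eqP => q0; move: hq; rewrite q0 mul0r => /eqP; rewrite eq_sym oner_eq0.
have : q * (y * (3*x^+2 - 1 - y^+2)) = 0 by rewrite -E2; ring.
move/eqP; rewrite mulf_eq0 (negbTE q0) /= mulf_eq0 => /orP [/eqP y00|/eqP yy].
  subst y.
  have E : q * ((x - t) * (x^+2 + x*t + t^+2 - 1)) = 0.
    move: E1; rewrite !expr0n /= mulr0 subr0 => E1.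
    nra.
  move/eqP: E; rewrite mulf_eq0 (negbTE q0) /= mulf_eq0 => /orP [/eqP h|/eqP E].
    have -> : x = t by lra.
    by split.
  have tx : t <= x.
    rewrite leNgt; apply/negP => xt.
    have : x^+2 + x*t + t^+2 < 3 * c3^+2 by nra.
    lra.
  split => // xt.
  by have -> : x = t by lra.
have yy' : y^+2 = 3*x^+2 - 1 by lra.
have E : 8*x^+3 - 2*x = t - t^+3.
  rewrite yy' in E1.
  have E1' : q * (8*x^+3 - 2*x) = 1 by nra.
  apply: (mulfI q0); lra.
have xc : c3 <= x.
  rewrite leNgt; apply/negP => xc.
  have : x^+2 < c3^+2 by nra.
  have := sqr_ge0 y; lra.
have E3 : (x - c3) * (8*(x^+2 + x*c3 + c3^+2) - 2) + (c3 - t) * (1 - (c3^+2 + c3*t + t^+2)) = 0.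
  nra.
have H1 : 0 <= (x - c3) * (8*(x^+2 + x*c3 + c3^+2) - 2).
  apply: mulr_ge0; first lra. nra.
have H2 : 0 <= (c3 - t) * (1 - (c3^+2 + c3*t + t^+2)).
  apply: mulr_ge0; first lra. nra.
have H3 : (x - c3) * (8*(x^+2 + x*c3 + c3^+2) - 2) = 0 by lra.
have xc' : x = c3.
  move/eqP: H3; rewrite mulf_eq0 => /orP [/eqP|/eqP h]; first lra.
  exfalso; nra.
have H4 : (c3 - t) * (1 - (c3^+2 + c3*t + t^+2)) = 0 by lra.
have tc' : t = c3.
  move/eqP: H4; rewrite mulf_eq0 => /orP [/eqP|/eqP h]; first lra.
  nra.
subst x t.
split => // _.
have : y^+2 = 0 by rewrite yy'; lra.
by move/eqP; rewrite sqrf_eq0 => /eqP ->.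
Qed.

Lemma tqC q a : c3 <= a -> q * (8*a^+3 - 2*a) = 1 ->
  tilde_q q = a +i* Num.sqrt (3*a^+2 - 1).
Proof.
move=> ha hq; rewrite /tilde_q; apply: xget_unique.
  split; first exact: admC.
  by move=> w hw; rewrite (uniqC ha hq hw).
by move=> w [hw _]; exact: uniqC ha hq hw.
Qed.

Lemma tqR q t : 0 < t <= c3 -> q * (t - t^+3) = 1 -> tilde_q q = t +i* 0.
Proof.
move=> ht hq; rewrite /tilde_q; apply: xget_unique.
  split; first exact: admR.
  by move=> [x y] hw; have [h _] := minR ht hq hw.
move=> [x y] [hw hmin].
have /= xt := hmin _ (admR ht hq).
by have [_ ->] := minR ht hq hw.
Qed.

Lemma ln_sqrt (u : R) : 0 < u -> ln (Num.sqrt u) = ln u / 2.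
Proof.
move=> u0.
have su : 0 < Num.sqrt u by rewrite sqrtr_gt0.
have := lnXn 2 su; rewrite sqr_sqrtr ?ltW // => ->.
by rewrite -mulr_natr; field.
Qed.

Definition Lc (a : R) := (ln (4*a^+2 - 2*a) - ln (4*a^+2 + 2*a)) / 2 + (1 - 2*a^+2) / (8*a^+3 - 2*a).
Definition Lr (t : R) := ln (1 - t) - ln (1 + t) + t / (1 - t^+2).

Lemma HC q a : c3 <= a -> q * (8*a^+3 - 2*a) = 1 -> tilde_H q = expR (Lc a).
Proof.
move=> ha hq; rewrite /tilde_H (tqC ha hq).
have c0 := c3_gt0; have cs := c3_sq.
have a0 : 0 < a by apply: lt_le_trans ha.
have hb : 0 <= 3*a^+2 - 1 by nra.
set b := Num.sqrt _.
have b2 : b^+2 = 3*a^+2 - 1 by rewrite sqrt_sq.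
have P0 : 0 < 8*a^+3 - 2*a by nra.
have A0 : 0 < 4*a^+2 - 2*a by nra.
have B0 : 0 < 4*a^+2 + 2*a by nra.
have qe : q = (8*a^+3-2*a)^-1 by rewrite -(mulfK (lt0r_neq0 P0) q) hq div1r.
congr expR.
have e1 : a +i* b - 1 = (a - 1) +i* b.
  by apply/eqP; rewrite eq_complex /=; apply/andP; split; apply/eqP; ring.
have e2 : a +i* b + 1 = (a + 1) +i* b.
  by apply/eqP; rewrite eq_complex /=; apply/andP; split; apply/eqP; ring.
rewrite e1 e2 ComplexField.Normc.normcM ComplexField.Normc.normcV /=.
have -> : (a - 1) ^+ 2 + b ^+ 2 = 4*a^+2 - 2*a by rewrite b2; ring.
have -> : (a + 1) ^+ 2 + b ^+ 2 = 4*a^+2 + 2*a by rewrite b2; ring.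
rewrite lnM ?posrE ?invr_gt0 ?sqrtr_gt0 // lnV ?posrE ?sqrtr_gt0 //.
rewrite !ln_sqrt // /Lc qe.
have -> : a * a - b * b = 1 - 2 * a^+2 by rewrite -expr2 -[b * b]expr2 b2; ring.
rewrite mulrC. ring.
Qed.

Lemma HR q t : 0 < t <= c3 -> q * (t - t^+3) = 1 -> tilde_H q = expR (Lr t).
Proof.
move=> ht hq; rewrite /tilde_H (tqR ht hq).
have c0 := c3_gt0; have cs := c3_sq.
case/andP: ht => t0 tc.
have t1 : t < 1 by nra.
have P0 : 0 < t - t^+3 by nra.
have qe : q = (t - t^+3)^-1 by rewrite -(mulfK (lt0r_neq0 P0) q) hq div1r.
congr expR.
have e1 : t +i* 0 - 1 = (t - 1) +i* 0.
  by apply/eqP; rewrite eq_complex /=; apply/andP; split; apply/eqP; ring.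
have e2 : t +i* 0 + 1 = (t + 1) +i* 0.
  by apply/eqP; rewrite eq_complex /=; apply/andP; split; apply/eqP; ring.
rewrite e1 e2 ComplexField.Normc.normcM ComplexField.Normc.normcV /=.
rewrite !expr0n /= !addr0 !sqrtr_sqr ltr0_norm ?subr_lt0 // gtr0_norm; last lra.
rewrite lnM ?posrE ?invr_gt0 //; try lra.
rewrite lnV ?posrE //; try lra.
rewrite /Lr qe.
have -> : t * t - 0 * 0 = t^+2 by rewrite mul0r subr0 expr2.
rewrite opprB (addrC t 1).
congr (_ + _).
have h1 : 1 - t^+2 != 0 by apply/eqP; nra.
have h2 : t - t^+3 != 0 by apply/eqP; nra.
have h3 : t != 0 by apply/eqP; lra.
field.
by rewrite h1 h2.
Qed.

Lemma der_cont f (z df : R) : is_derive z 1 f df -> {for z, continuous f}.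
Proof. by case=> dd _; apply/differentiable_continuous/derivable1_diffP. Qed.

Lemma mvt_le f (df : R -> R) (x y : R) : x <= y ->
  (forall z, x <= z <= y -> is_derive z 1 f (df z)) ->
  (forall z, x <= z <= y -> 0 <= df z) -> f x <= f y.
Proof.
move=> xy hd hs.
have hd' : forall z, z \in `]x, y[ -> is_derive z 1 f (df z).
  by move=> z; rewrite in_itv /= => /andP [h1 h2]; apply: hd; rewrite !ltW.
have hc : {within `[x, y], continuous f}.
  apply: continuous_in_subspaceT => z; rewrite inE /= in_itv /= => h.
  exact: der_cont (hd z h).
have [z zin e] := MVT_segment xy hd' hc.
rewrite -subr_ge0 e; apply: mulr_ge0; last by rewrite subr_ge0.
by apply: hs; rewrite in_itv /= in zin.
Qed.

Definition Dc (a : R) := 2*(12*a^+2-1)*(2*a^+2-1) / (4*a^+2*(4*a^+2-1)^+2).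
Definition Dr (t : R) := (3*t^+2-1) / (1-t^+2)^+2.

Lemma derLc (a : R) : 1/2 < a -> is_derive a 1 Lc (Dc a).
Proof.
move=> ha.
have hA : 0 < 4*a^+2 - 2*a by nra.
have hB : 0 < 4*a^+2 + 2*a by nra.
have hP : 0 < 8*a^+3 - 2*a by nra.
apply: (deq (dD (dM (dD (dln _ (dD (dM (dcst 4 a) (dX 2 (did a))) (dN (dM (dcst 2 a) (did a)))))
                      (dN (dln _ (dD (dM (dcst 4 a) (dX 2 (did a))) (dM (dcst 2 a) (did a))))))
                    (dcst (2^-1) a))
                (dM (dD (dcst 1 a) (dN (dM (dcst 2 a) (dX 2 (did a)))))
                    (dV _ (dD (dM (dcst 8 a) (dX 3 (did a))) (dN (dM (dcst 2 a) (did a)))))))).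
- by [].
- by [].
- by rewrite /= lt0r_neq0.
rewrite /Dc /=.
have h1 : a != 0 by apply/eqP; lra.
have h2 : 4*a^+2 - 1 != 0 by apply/eqP; nra.
have h3 := lt0r_neq0 hA; have h4 := lt0r_neq0 hB; have h5 := lt0r_neq0 hP.
field.
by rewrite h1 h2 h3 h4 h5.
Qed.

Lemma derLr (t : R) : -1 < t < 1 -> is_derive t 1 Lr (Dr t).
Proof.
move=> /andP [t1 t2].
apply: (deq (dD (dD (dln _ (dD (dcst 1 t) (dN (did t)))) (dN (dln _ (dD (dcst 1 t) (did t)))))
                (dM (did t) (dV _ (dD (dcst 1 t) (dN (dX 2 (did t)))))))).
- by rewrite /=; lra.
- by rewrite /=; lra.
- by rewrite /=; apply/eqP; nra.
rewrite /Dr /=.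
have h1 : 1 - t != 0 by apply/eqP; lra.
have h2 : 1 + t != 0 by apply/eqP; lra.
have h3 : 1 - t^+2 != 0 by apply/eqP; nra.
field.
by rewrite h1 h2 h3.
Qed.

Definition w2 : R := (Num.sqrt 2)^-1.
Lemma w2_gt0 : 0 < w2.
Proof. by rewrite /w2 invr_gt0 sqrtr_gt0. Qed.
Lemma w2_sq : w2 ^+ 2 * 2 = 1.
Proof. by rewrite /w2 exprVn sqr_sqrtr // mulVf. Qed.

Lemma Lc_inc x y : w2 <= x -> x <= y -> Lc x <= Lc y.
Proof.
move=> wx xy; have w0 := w2_gt0; have ws := w2_sq.
apply: (mvt_le (df := Dc)) => // z /andP [h1 h2].
  apply: derLc; nra.
rewrite /Dc; apply: divr_ge0.
  apply: mulr_ge0; last nra.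
  apply: mulr_ge0; nra.
apply: mulr_ge0; first nra.
exact: sqr_ge0.
Qed.

Lemma Lc_dec x y : c3 <= x -> x <= y -> y <= w2 -> Lc y <= Lc x.
Proof.
move=> cx xy yw; have w0 := w2_gt0; have ws := w2_sq.
have c0 := c3_gt0; have cs := c3_sq.
rewrite -lerN2.
apply: (mvt_le (f := fun z => - Lc z) (df := fun z => - Dc z)) => // z /andP [h1 h2].
  apply: dN; apply: derLc; nra.
rewrite /Dc oppr_ge0; apply: mulr_le0_ge0.
  apply: mulr_ge0_le0; last nra.
  apply: mulr_ge0; nra.
rewrite invr_ge0; apply: mulr_ge0; first nra.
exact: sqr_ge0.
Qed.

Lemma Lr_dec x y : 0 < x -> x <= y -> y <= c3 -> Lr y <= Lr x.
Proof.
move=> x0 xy yc.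
have c0 := c3_gt0; have cs := c3_sq.
rewrite -lerN2.
apply: (mvt_le (f := fun z => - Lr z) (df := fun z => - Dr z)) => // z /andP [h1 h2].
  apply: dN; apply: derLr; apply/andP; split; nra.
rewrite /Dr oppr_ge0; apply: mulr_le0_ge0; first nra.
rewrite invr_ge0; exact: sqr_ge0.
Qed.

Lemma parC q q' a a' : c3 <= a -> c3 <= a' -> q * (8*a^+3 - 2*a) = 1 ->
  q' * (8*a'^+3 - 2*a') = 1 -> q <= q' -> a' <= a.
Proof.
move=> ha ha' hq hq' qq.
have c0 := c3_gt0; have cs := c3_sq.
rewrite leNgt; apply/negP => aa.
have a0 : 0 < a by apply: lt_le_trans ha.
have hb : 0 <= 3*a^+2 - 1 by nra.
have P0 : 0 < 8*a^+3 - 2*a by nra.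
have lt : 8*a^+3 - 2*a < 8*a'^+3 - 2*a'.
  have : 0 < (a' - a) * (8*(a'^+2 + a'*a + a^+2) - 2).
    apply: mulr_gt0; nra.
  move=> h; nra.
have q0 : 0 < q.
  rewrite ltNge; apply/negP => q0; nra.
nra.
Qed.

Lemma parR q q' t t' : 0 < t <= c3 -> 0 < t' <= c3 -> q * (t - t^+3) = 1 ->
  q' * (t' - t'^+3) = 1 -> q <= q' -> t' <= t.
Proof.
move=> /andP [t0 tc] /andP [t0' tc'] hq hq' qq.
have c0 := c3_gt0; have cs := c3_sq.
rewrite leNgt; apply/negP => tt.
have t2 : t^+2 <= c3^+2 by nra.
have P0 : 0 < t - t^+3.
  have -> : t - t^+3 = t * (1 - t^+2) by ring.
  apply: mulr_gt0 => //; lra.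
have lt : t - t^+3 < t' - t'^+3.
  have : 0 < (t' - t) * (1 - (t'^+2 + t'*t + t^+2)).
    apply: mulr_gt0; nra.
  move=> h; nra.
have q0 : 0 < q.
  rewrite ltNge; apply/negP => q0; nra.
nra.
Qed.

Definition Q0 : R := 3 / (2 * c3).

Lemma existC q : 0 < q -> q <= Q0 -> exists a, c3 <= a /\ q * (8*a^+3 - 2*a) = 1.
Proof.
move=> q0 qQ.
have c0 := c3_gt0; have cs := c3_sq.
have qQ' : q * (2 * c3) <= 3 by rewrite /Q0 ler_pdivlMr ?mulr_gt0 // in qQ.
set b := 1 + q^-1.
have qi : 0 < q^-1 by rewrite invr_gt0.
have qqi : q * q^-1 = 1 by rewrite mulfV // gt_eqF.
have cb : c3 <= b.
  have : c3 <= 1 by nra.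
  rewrite /b; lra.
pose f := fun a : R => 8*a^+3 - 2*a.
have fd : forall z : R, is_derive z 1 f (8 * (3%:R * z ^+ 2 * 1) + - (2 * 1)).
  move=> z; apply: (deq (dD (dM (dcst 8 z) (dX 3 (did z))) (dN (dM (dcst 2 z) (did z))))).
  by rewrite /= !mulr0 !addr0.
have fc : f c3 <= q^-1.
  rewrite -(ler_pM2l q0) qqi /f; nra.
have fb : q^-1 <= f b.
  rewrite -(ler_pM2l q0) qqi /f /b.
  have h : 8 * (1 + q^-1) ^+ 3 - 2 * (1 + q^-1) = 6 + 6 * q^-1 + 8 * (q^-1 * (2 + 3 * q^-1 + q^-1^+2)) by ring.
  rewrite h.
  have -> : q * (6 + 6 * q^-1 + 8 * (q^-1 * (2 + 3 * q^-1 + q^-1^+2))) = 6 * q + 6 * (q * q^-1) + 8 * (q * q^-1) * (2 + 3 * q^-1 + q^-1^+2) by ring.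
  rewrite qqi.
  have : 0 <= 2 + 3 * q^-1 + q^-1^+2 by have := sqr_ge0 q^-1; lra.
  nra.
have [a ain fa] : exists2 a, a \in `[c3, b] & f a = q^-1.
  apply: IVT => //.
    apply: continuous_in_subspaceT => z _; exact: der_cont (fd z).
  apply/andP; split.
    by rewrite ge_min fc.
  by rewrite le_max fb orbT.
exists a; split; first by rewrite in_itv /= in ain; case/andP: ain.
by rewrite -[_ - _]/(f a) fa.
Qed.

Lemma existR q : Q0 <= q -> exists t, 0 < t <= c3 /\ q * (t - t^+3) = 1.
Proof.
move=> qQ.
have c0 := c3_gt0; have cs := c3_sq.
have Q00 : 0 < Q0 by rewrite /Q0 divr_gt0 // mulr_gt0.
have q0 : 0 < q by apply: lt_le_trans qQ.
have qQ' : 3 <= q * (2 * c3) by rewrite /Q0 ler_pdivrMr ?mulr_gt0 // in qQ.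
have qi : 0 < q^-1 by rewrite invr_gt0.
have qqi : q * q^-1 = 1 by rewrite mulfV // gt_eqF.
set l := q^-1 / 2.
have l0 : 0 < l by rewrite /l divr_gt0.
have lc : l <= c3.
  rewrite /l ler_pdivrMr // -(ler_pM2l q0) mulrA qqi; nra.
pose f := fun a : R => a - a^+3.
have fd : forall z : R, is_derive z 1 f (1 + - (3%:R * z ^+ 2 * 1)).
  move=> z; apply: (deq (dD (did z) (dN (dX 3 (did z))))).
  by rewrite /=.
have fl : f l <= q^-1.
  rewrite /f /l. have := exprn_ge0 3 (ltW l0); rewrite /l; lra.
have fc : q^-1 <= f c3.
  rewrite -(ler_pM2l q0) qqi /f; nra.
have [t tin ft] : exists2 t, t \in `[l, c3] & f t = q^-1.
  apply: IVT => //.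
    apply: continuous_in_subspaceT => z _; exact: der_cont (fd z).
  apply/andP; split.
    by rewrite ge_min fl.
  by rewrite le_max fc orbT.
rewrite in_itv /= in tin; case/andP: tin => lt tc.
exists t; split; first by rewrite tc (lt_le_trans l0 lt).
by rewrite -[_ - _]/(f t) ft.
Qed.

Lemma w2_lt_Q0 : w2 < Q0.
Proof.
have c0 := c3_gt0; have cs := c3_sq; have w0 := w2_gt0; have ws := w2_sq.
have w1 : w2 < 1 by nra.
have c1 : c3 < 1 by nra.
have : 1 <= Q0 by rewrite /Q0 ler_pdivlMr ?mulr_gt0 //; lra.
lra.
Qed.

Lemma aw_hi q a : c3 <= a -> q * (8*a^+3 - 2*a) = 1 -> q < w2 -> w2 <= a.
Proof.
move=> ha hq qw.
have c0 := c3_gt0; have cs := c3_sq; have w0 := w2_gt0; have ws := w2_sq.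
have a0 : 0 < a by apply: lt_le_trans ha.
have hb : 0 <= 3*a^+2 - 1 by nra.
have P0 : 0 < 8*a^+3 - 2*a by nra.
rewrite leNgt; apply/negP => aw.
have lt : 8*a^+3 - 2*a < 2 * w2.
  have : 0 < (w2 - a) * (8*(w2^+2 + w2*a + a^+2) - 2) by apply: mulr_gt0; nra.
  nra.
have q0 : 0 < q by rewrite ltNge; apply/negP => q0; nra.
nra.
Qed.

Lemma aw_lo q a : c3 <= a -> q * (8*a^+3 - 2*a) = 1 -> w2 <= q -> a <= w2.
Proof.
move=> ha hq qw.
have c0 := c3_gt0; have cs := c3_sq; have w0 := w2_gt0; have ws := w2_sq.
have a0 : 0 < a by apply: lt_le_trans ha.
rewrite leNgt; apply/negP => aw.
have lt : 2 * w2 < 8*a^+3 - 2*a.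
  have : 0 < (a - w2) * (8*(w2^+2 + w2*a + a^+2) - 2) by apply: mulr_gt0; nra.
  nra.
nra.
Qed.

Lemma part1 x y : 0 < x -> x <= y -> y < w2 -> tilde_H y <= tilde_H x.
Proof.
move=> x0 xy yw.
have wQ := w2_lt_Q0.
have [ax [hax hqx]] := existC x0 (ltW (le_lt_trans xy (lt_trans yw wQ))).
have [ay [hay hqy]] := existC (lt_le_trans x0 xy) (ltW (lt_trans yw wQ)).
rewrite (HC hax hqx) (HC hay hqy) ler_expR.
apply: Lc_inc; first exact: aw_hi hay hqy yw.
exact: parC hax hay hqx hqy xy.
Qed.

Lemma part2a x y : w2 <= x -> x <= y -> y <= Q0 -> tilde_H x <= tilde_H y.
Proof.
move=> wx xy yQ.
have w0 := w2_gt0.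
have x0 : 0 < x by apply: lt_le_trans wx.
have [ax [hax hqx]] := existC x0 (le_trans xy yQ).
have [ay [hay hqy]] := existC (lt_le_trans x0 xy) yQ.
rewrite (HC hax hqx) (HC hay hqy) ler_expR.
apply: Lc_dec => //; first exact: parC hax hay hqx hqy xy.
exact: aw_lo hax hqx wx.
Qed.

Lemma part2b x y : Q0 <= x -> x <= y -> tilde_H x <= tilde_H y.
Proof.
move=> Qx xy.
have [tx [htx hqx]] := existR Qx.
have [ty [hty hqy]] := existR (le_trans Qx xy).
rewrite (HR htx hqx) (HR hty hqy) ler_expR.
have /andP [ty0 _] := hty; have /andP [_ txc] := htx.
apply: Lr_dec => //.
exact: parR htx hty hqx hqy xy.
Qed.

Definition Phic (u : R) := expR ((ln (4 - 2*u) - ln (4 + 2*u)) / 2 + (u^+3 - 2*u) / (8 - 2*u^+2)).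

Lemma Phic_cont : {for 0, continuous Phic}.
Proof.
apply: (@der_cont _ _ _ (dexp (dD (dM (dD (dln _ (dD (dcst 4 0) (dN (dM (dcst 2 0) (did 0)))))
                      (dN (dln _ (dD (dcst 4 0) (dM (dcst 2 0) (did 0))))))
                    (dcst (2^-1) 0))
                (dM (dD (dX 3 (did 0)) (dN (dM (dcst 2 0) (did 0))))
                    (dV _ (dD (dcst 8 0) (dN (dM (dcst 2 0) (dX 2 (did 0)))))))))).
- by rewrite /= mulr0 subr0.
- by rewrite /= mulr0 addr0.
- by rewrite /= expr0n /= mulr0 subr0.
Qed.

Lemma Phic0 : Phic 0 = 1.
Proof.
rewrite /Phic -[X in _ = X]expR0; congr expR.
rewrite !mulr0 subr0 addr0 subrr mul0r add0r.
by rewrite expr0n /= subr0 mul0r.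
Qed.

Lemma Lc_Phic a : c3 <= a -> expR (Lc a) = Phic a^-1.
Proof.
move=> ha.
have c0 := c3_gt0; have cs := c3_sq.
have a0 : 0 < a by apply: lt_le_trans ha.
have ha2 : 1 < 2 * a by nra.
have hb : 0 <= 3*a^+2 - 1 by nra.
have an : a != 0 by rewrite gt_eqF.
have e1 : 4 - 2*a^-1 = (4*a - 2)/a by field.
have e2 : 4 + 2*a^-1 = (4*a + 2)/a by field.
have p1 : 0 < 4 - 2*a^-1 by rewrite e1 divr_gt0 //; lra.
have p2 : 0 < 4 + 2*a^-1 by rewrite e2 divr_gt0 //; lra.
have a2 : 0 < a^+2 by rewrite exprn_gt0.
rewrite /Phic /Lc; congr expR.
have -> : 4*a^+2 - 2*a = a^+2 * (4 - 2*a^-1) by field.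
have -> : 4*a^+2 + 2*a = a^+2 * (4 + 2*a^-1) by field.
rewrite !lnM ?posrE //.
have -> : forall x y z : R, (x + x + y - (x + x + z)) = y - z by move=> *; ring.
congr (_ + _).
have h1 : 4*a^+2 - 1 != 0 by apply/eqP; nra.
have h2 : 8*a^+3 - 2*a != 0 by apply/eqP; nra.
have h3 : 8 - 2 * a^-1^+2 != 0.
  have -> : 8 - 2 * a^-1^+2 = (8*a^+2 - 2) / a^+2 by field.
  apply: mulf_neq0; first by apply/eqP; nra.
  by rewrite invr_eq0 gt_eqF.
field.
have h4 : 8*a^+2 - 2 != 0 by apply/eqP; nra.
by rewrite an h2 h4.
Qed.

Lemma lim0 : tilde_H x @[x --> (0:R)^'+] --> (1:R).
Proof.
apply/cvgrPdist_lt => e e0.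
have : Phic x @[x --> (0:R)] --> Phic 0 := Phic_cont.
rewrite Phic0.
move/cvgrPdist_lt/(_ e e0)/nbhs_ballP => [d /= d0 Hd].
have c0 := c3_gt0; have cs := c3_sq.
set M := 1 + d^-1.
have M0 : 0 < M by rewrite /M; have := invr_gt0 d; rewrite d0 => /= h; lra.
set K := (8 * M^+3)^-1.
have K0 : 0 < K by rewrite /K invr_gt0 mulr_gt0 // exprn_gt0.
have Q00 : 0 < Q0 by rewrite /Q0 divr_gt0 // mulr_gt0.
near=> q.
have q0 : 0 < q by near: q; exact: nbhs_right_gt.
have qQ : q < Q0 by near: q; exact: nbhs_right_lt.
have qK : q < K by near: q; exact: nbhs_right_lt.
have [a [ha hq]] := existC q0 (ltW qQ).
rewrite (HC ha hq) Lc_Phic //.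
apply: Hd.
have a0 : 0 < a by apply: lt_le_trans ha.
rewrite /ball /= sub0r normrN gtr0_norm ?invr_gt0 //.
have dd : d * d^-1 = 1 by rewrite mulfV // gt_eqF.
have di : 0 < d^-1 by rewrite invr_gt0.
have aM : M < a.
  rewrite ltNge; apply/negP => aM.
  have a3 : a^+3 <= M^+3.
    have : 0 <= (M - a) * (M^+2 + M*a + a^+2).
      apply: mulr_ge0; first lra.
      have := sqr_ge0 M; have := sqr_ge0 a; nra.
    nra.
  have qK' : q * (8 * M^+3) < 1.
    by move: qK; rewrite /K -div1r ltr_pdivlMr // mulr_gt0 // exprn_gt0.
  nra.
rewrite -(ltr_pM2l a0) mulfV ?gt_eqF //.
rewrite /M in aM; nra.
Unshelve. all: end_near.
Qed.

Lemma liminf : tilde_H x @[x --> +oo] --> (1:R).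
Proof.
apply/cvgrPdist_lt => e e0.
have hd0 : is_derive (0:R) 1 (fun t => expR (Lr t)) (expR (Lr 0) * Dr 0).
  apply: dexp; apply: derLr; apply/andP; split; lra.
have : (fun t => expR (Lr t)) x @[x --> (0:R)] --> expR (Lr 0) := der_cont hd0.
have -> : expR (Lr 0) = 1.
  by rewrite /Lr subr0 addr0 subrr add0r expr0n /= subr0 divr1 expR0.
move/cvgrPdist_lt/(_ e e0)/nbhs_ballP => [d /= d0 Hd].
have c0 := c3_gt0; have cs := c3_sq.
near=> q.
have qQ : Q0 < q by near: q; apply: nbhs_pinfty_gt; exact: num_real.
have qd : 3 / (2 * d) < q by near: q; apply: nbhs_pinfty_gt; exact: num_real.
have [t [ht hq]] := existR (ltW qQ).
rewrite (HR ht hq).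
apply: Hd.
have /andP [t0 tc] := ht.
rewrite /ball /= sub0r normrN gtr0_norm //.
have t2 : t^+2 <= c3^+2 by nra.
have Q00 : 0 < Q0 by rewrite /Q0 divr_gt0 // mulr_gt0.
have q0 : 0 < q by apply: lt_trans qQ.
have h1 : 2 * (t * q) <= 3.
  have ee : q * t * (1 - t^+2) = q * (t - t^+3) by ring.
  rewrite hq in ee.
  nra.
move: qd; rewrite ltr_pdivrMr ?mulr_gt0 // => qd.
nra.
Unshelve. all: end_near.
Qed.
End S.

Theorem theorem3 (R : realType) :
  (forall x y : R, 0 < x -> x <= y -> y < (Num.sqrt 2)^-1 ->
     tilde_H y <= tilde_H x) /\
  (forall x y : R, (Num.sqrt 2)^-1 <= x -> x <= y ->
     tilde_H x <= tilde_H y) /\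
  (tilde_H x @[x --> (0:R)^'+] --> (1:R)) /\
  (tilde_H x @[x --> +oo] --> (1:R)).
Proof.
split; first by move=> x y x0 xy yw; exact: part1.
split.
  move=> x y wx xy.
  case: (leP y (Q0 R)) => yQ; first exact: part2a.
  case: (leP (Q0 R) x) => Qx; first exact: part2b.
  exact: le_trans (part2a wx (ltW Qx) (lexx _)) (part2b (lexx _) (ltW yQ)).
split; [exact: lim0 | exact: liminf].
Qed.
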